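(* Let $\alpha,\alpha'$ be Morse–Thue decorated sentences over a finite alphabet $A$. Suppose that $\alpha$ and $\alpha'$ have a common final segment (identical as strings of decorated letters, including decorated stop signs) containing at least $l$ letters from $A$, where $l\ge0$ is an integer, and that $\big||\alpha|-|\alpha'|\big|\le l/2$. Then $|\alpha|=|\alpha'|$.
   Context: Morse–Thue sequence: start from $0$ and repeatedly apply the substitution $0\mapsto01$, $1\mapsto10$, obtaining $0,01,0110,01101001,\dots$; the limit infinite sequence is $(t(m))_{m\ge0}$ with values in $\{0,1\}$. A sentence over $A$ is a finite string in $A\cup\{s\}$ ending with the stop sign $s\notin A$ (words of $A$ each terminated by $s$). Levels of letters: the first letter has level 1 if it is not $s$ and 0 otherwise; each subsequent letter has level one more than the previous letter if it is not $s$, and the same level as the previous letter if it is $s$. The length $|\alpha|$ is the level of the last letter (i.e. the number of letters from $A$). The Morse–Thue decoration of $\alpha$ replaces every letter $x$ (including stop signs) of level $m$ by $(x,t(m))$. *)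

(* Defs.v *)
From mathcomp Require Import all_boot.
Set Implicit Arguments. Unset Strict Implicit. Unset Printing Implicit Defensive.

Definition mt_subst (w : seq bool) : seq bool :=
  flatten [seq [:: b; ~~ b] | b <- w].

Definition mt_word (n : nat) : seq bool := iter n mt_subst [:: false].

(* The limit sequence t(m): the m-th letter of mt_word m (which has length
   2^m > m, and every later iterate extends it as a prefix). *)
Definition mt (m : nat) : nat := nth false (mt_word m) m.

(* Letters of a sentence: Some a for a letter a of A, None for the stop
   sign s. *)
Definition is_letter (A : Type) (x : option A) : bool :=
  if x is Some _ then true else false.

Definition is_sentence (A : Type) (al : seq (option A)) : bool :=
  if al is [::] then false else ~~ is_letter (last None al).

(* Length |alpha| = level of the last letter = number of letters from A. *)
Definition slen (A : Type) (al : seq (option A)) : nat :=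
  count (@is_letter A) al.

Fixpoint deco_aux (A : Type) (m : nat) (al : seq (option A))
  : seq (option A * nat) :=
  match al with
  | [::] => [::]
  | x :: al' =>
      let m' := m + is_letter x in (x, mt m') :: deco_aux m' al'
  end.

Definition mt_decorate (A : Type) (al : seq (option A)) := deco_aux 0 al.

Definition dletters (A : Type) (w : seq (option A * nat)) : nat :=
  count (fun p => is_letter p.1) w.

(* Main.v *)
Require Import Defs.
From mathcomp Require Import all_boot zify.

Lemma mt_subst_cons x w : mt_subst (x :: w) = [:: x; ~~ x] ++ mt_subst w.
Proof. by []. Qed.

Lemma mt_subst_cat a b : mt_subst (a ++ b) = mt_subst a ++ mt_subst b.
Proof. by rewrite /mt_subst map_cat flatten_cat. Qed.

Lemma mt_subst_neg w : mt_subst (map negb w) = map negb (mt_subst w).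
Proof. by elim: w => [|x w IH] //=; rewrite !mt_subst_cons IH /= negbK. Qed.

Lemma mt_word_S n : mt_word n.+1 = mt_word n ++ map negb (mt_word n).
Proof.
elim: n => [|n IH] //.
have -> : mt_word n.+2 = mt_subst (mt_word n.+1) by [].
by rewrite {1}IH mt_subst_cat mt_subst_neg.
Qed.

Lemma size_mt_word n : size (mt_word n) = 2 ^ n.
Proof. by elim: n => [|n IH] //; rewrite mt_word_S size_cat size_map IH expnS; lia. Qed.

Lemma nth_subst w j : j < size w ->
  nth false (mt_subst w) j.*2 = nth false w j /\
  nth false (mt_subst w) j.*2.+1 = ~~ nth false w j.
Proof.
elim: w j => [|x w IH] [|j] //= H.
exact: IH.
Qed.

Lemma mt_word_pre n k i : i < 2 ^ n -> nth false (mt_word (n + k)) i = nth false (mt_word n) i.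
Proof.
move=> Hi; elim: k => [|k IH]; first by rewrite addn0.
rewrite addnS mt_word_S nth_cat size_mt_word ifT // (leq_trans Hi) //.
by rewrite leq_exp2l // leq_addr.
Qed.

Definition tb i := nth false (mt_word i) i.

Lemma tb_any n i : i < 2 ^ n -> tb i = nth false (mt_word n) i.
Proof.
move=> Hi; rewrite /tb.
have Hi' : i < 2 ^ i by apply: ltn_expl.
case: (leqP i n) => H.
  by rewrite -(subnKC H) (@mt_word_pre i (n - i) i Hi').
by rewrite -{1}(subnKC (ltnW H)) (@mt_word_pre n (i - n) i Hi).
Qed.

Lemma tb_even j : tb j.*2 = tb j.
Proof.
have Hj : j < 2 ^ j by apply: ltn_expl.
rewrite (@tb_any j.+1); last by rewrite expnS; lia.
have -> : mt_word j.+1 = mt_subst (mt_word j) by [].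
have Hs : j < size (mt_word j) by rewrite size_mt_word.
by rewrite (@nth_subst _ _ Hs).1.
Qed.

Lemma tb_odd j : tb j.*2.+1 = ~~ tb j.
Proof.
have Hj : j < 2 ^ j by apply: ltn_expl.
rewrite (@tb_any j.+1); last by rewrite expnS; lia.
have -> : mt_word j.+1 = mt_subst (mt_word j) by [].
have Hs : j < size (mt_word j) by rewrite size_mt_word.
by rewrite (@nth_subst _ _ Hs).2.
Qed.

Lemma no3 j : ~ (tb j = tb j.+1 /\ tb j.+1 = tb j.+2).
Proof.
case/boolP: (odd j) => Ho [E1 E2].
  move: E2; rewrite -(odd_double_half j) Ho /= -!doubleS tb_even tb_odd.
  by case: (tb _).
move: E1; rewrite -(odd_double_half j) (negbTE Ho) /= tb_even tb_odd.
by case: (tb _).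
Qed.

Lemma no5 y : ~ (tb y != tb y.+1 /\ tb y.+1 != tb y.+2 /\ tb y.+2 != tb y.+3 /\ tb y.+3 != tb y.+4).
Proof.
case=> E1 [E2 [E3 E4]].
have [h [Ey|Ey]] : exists h, y = h.*2 \/ y = h.*2.+1.
  exists y./2; rewrite -{1 3}(odd_double_half y); case: (odd y); [right|left] => //.
  subst y; move: E1 E2 E3 E4; rewrite -!doubleS !tb_even !tb_odd => E1 E2 E3 E4.
  apply: (no3 h); move: E1 E2 E3 E4; case: (tb h); case: (tb h.+1); case: (tb h.+2) => //.
subst y; move: E1 E2 E3 E4; rewrite -!doubleS !tb_even !tb_odd => E1 E2 E3 E4.
apply: (no3 h); move: E1 E2 E3 E4; case: (tb h); case: (tb h.+1); case: (tb h.+2) => //.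
Qed.

Lemma even_diff z : ~~ odd z -> tb z != tb z.+1.
Proof.
move=> Hz; rewrite -(odd_double_half z) (negbTE Hz) add0n tb_odd tb_even.
by case: (tb _).
Qed.

Lemma nocube d : forall m, 0 < d -> ~ (forall i, i < 2 * d -> tb (m + i) = tb (m + i + d)).
Proof.
elim/ltn_ind: d => d IHd m Hd H.
have H' : forall x, m <= x -> x < m + 2 * d -> tb x = tb (x + d).
  move=> x H1 H2; have := H (x - m); rewrite subnKC //; apply; lia.
case/boolP: (odd d) => Hod.
  have D : forall y, m <= y -> y.+1 < m + 3 * d -> tb y != tb y.+1.
    move=> y H1 H2; case/boolP: (odd y) => Hoy; last exact: even_diff.
    case: (leqP (m + d) y) => H3.
      have Ex : ~~ odd (y - d) by rewrite oddB ?Hoy ?Hod //; lia.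
      have := even_diff _ Ex.
      rewrite (H' (y - d)); try lia.
      rewrite (H' (y - d).+1); try lia.
      by rewrite subnK ?addSn ?subnK //; lia.
    have Ex : ~~ odd (y + d) by rewrite oddD Hoy Hod.
    have := even_diff _ Ex.
    by rewrite -(H' y) -?addSn -?(H' y.+1) //; lia.
  have [E1|D3] : d = 1 \/ 3 <= d.
    case: d Hd Hod {IHd H H' D} => [|[|[|d]]] //=; auto.
  subst d; have := D m (leqnn m) ltac:(lia); rewrite (H' m) //; last by lia.
  by rewrite addn1 eqxx.
  apply: (no5 m); split; first by apply: D; lia.
  split; first by apply: D; lia.
  split; first by apply: D; lia.
  by apply: D; lia.
pose e := d./2.
have De : d = e.*2 by rewrite /e -{1}(odd_double_half d) (negbTE Hod).
apply: (IHd e _ (uphalf m)); try lia.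
move=> i Hi.
have := H' (uphalf m + i).*2 _ _.
rewrite tb_even.
have -> : (uphalf m + i).*2 + d = (uphalf m + i + e).*2 by lia.
rewrite tb_even; apply.
  rewrite uphalf_half; lia.
rewrite uphalf_half; lia.
Qed.

Lemma deco_cat (A : Type) c (a b : seq (option A)) :
  deco_aux c (a ++ b) = deco_aux c a ++ deco_aux (c + slen a) b.
Proof.
elim: a c => [|x a IH] c /=; first by rewrite addn0.
by rewrite IH /slen /= addnA.
Qed.

Lemma size_deco (A : Type) c (s : seq (option A)) : size (deco_aux c s) = size s.
Proof. by elim: s c => [|x s IH] c //=; rewrite IH. Qed.

Lemma fst_deco (A : Type) c (s : seq (option A)) : map fst (deco_aux c s) = s.
Proof. by elim: s c => [|x s IH] c //=; rewrite IH. Qed.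

Lemma dletters_deco (A : Type) c (s : seq (option A)) : dletters (deco_aux c s) = slen s.
Proof. by rewrite /dletters /slen -{2}(fst_deco _ c s) count_map. Qed.

Lemma suffix_deco (A : eqType) (w : seq (option A * nat)) al :
  suffix w (mt_decorate al) -> exists c s, w = deco_aux c s /\ c + slen s = slen al.
Proof.
case/suffixP => p E.
have Hk : size p <= size al by rewrite -(size_deco _ 0 al); move: E; rewrite /mt_decorate => ->; rewrite size_cat leq_addr.
exists (slen (take (size p) al)), (drop (size p) al); split.
  have := congr1 (drop (size p)) E.
  rewrite drop_size_cat // /mt_decorate -{1}(cat_take_drop (size p) al) deco_cat drop_size_cat //.
  by rewrite size_deco size_take_min (minn_idPl Hk).
by rewrite /slen -count_cat cat_take_drop.
Qed.

Lemma nob (b1 b2 : bool) : nat_of_bool b1 = nat_of_bool b2 -> b1 = b2.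
Proof. by case: b1; case: b2. Qed.

Lemma deco_eq (A : Type) c c' (s : seq (option A)) : deco_aux c s = deco_aux c' s ->
  forall i, i < slen s -> tb (c + i.+1) = tb (c' + i.+1).
Proof.
elim: s c c' => [|x s IH] c c' //= [E1 E2] i; rewrite /slen /=.
case: x E1 E2 => [a|] /= E1 E2.
  case: i => [|i] Hi.
    rewrite !addn1; move: E1; rewrite /mt !addn1.
    move=> E; exact: (nob (tb c.+1) (tb c'.+1) E).
  have := IH _ _ E2 i; rewrite -!addnA !add1n; apply; rewrite /slen; lia.
rewrite !addn0 in E2; rewrite add0n => Hi; exact: IH.
Qed.

Lemma asym (A : eqType) (w : seq (option A * nat)) al al' l :
  suffix w (mt_decorate al) -> suffix w (mt_decorate al') -> l <= dletters w ->
  slen al < slen al' -> 2 * slen al' <= 2 * slen al + l -> False.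
Proof.
move=> /suffix_deco [c [s [-> E]]] /suffix_deco [c' [s' [E' E2]]].
have Ss : s = s' by rewrite -(fst_deco _ c s) E' fst_deco.
subst s'; rewrite dletters_deco => Hl Hlt Hle.
pose d := c' - c.
apply: (@nocube d (c.+1)); first by rewrite /d; lia.
move=> i Hi.
have := deco_eq _ _ _ _ E' i _.
have -> : c' + i.+1 = c.+1 + i + d by rewrite /d; lia.
rewrite -addSnnS addSn; apply; lia.
Qed.

Theorem mainTheorem18 (A : finType) (al al' : seq (option A)) (l : nat) :
  is_sentence al -> is_sentence al' ->
  (exists w : seq (option A * nat),
      [/\ suffix w (mt_decorate al), suffix w (mt_decorate al') & l <= dletters w]) ->
  2 * slen al <= 2 * slen al' + l ->
  2 * slen al' <= 2 * slen al + l ->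
  slen al = slen al'.
Proof.
move=> _ _ [w [S1 S2 Hl]] H1 H2.
case: (ltngtP (slen al) (slen al')) => // Hc.
  by case: (asym _ _ _ _ _ S1 S2 Hl Hc H2).
by case: (asym _ _ _ _ _ S2 S1 Hl Hc H1).
Qed.
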